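(* Assume (A2) and a congestion game payoff structure with continuously differentiable, nonincreasing resource rewards $w_r$. Then the set of mixed stationary Nash equilibria of the mean field game is compact and convex. If moreover every $w_r$ is strictly decreasing, the equilibrium resource flows $\sigma_r$, $r\in\mathcal R$, are the same at every mixed stationary Nash equilibrium.
   Context: Model: classes $c\in[C]$ with masses $m^c>0$, finite state sets $\mathcal S^c$, nonempty finite admissible action sets $\mathcal A^c(s)$, transition kernels $\phi^c(\cdot\mid s,a)$. $\mathcal U^c_D$ = deterministic policies (maps $s\mapsto u(s)\in\mathcal A^c(s)$). $\phi^{c,u}_{ss'}=\phi^c(s\mid s',u(s'))$. (A2): for all $c,u\in\mathcal U^c_D$, $\phi^{c,u}$ has exactly one recurrent communicating class; $\eta^{c,u}$ is the unique stationary distribution of the continuous-time chain with generator $\lambda(\phi^{c,u}-I)$. Congestion game payoff structure: common action rate $\lambda>0$; finite resource set $\mathcal R$; each action is a subset of $\mathcal R$; $w_r:\mathbb R_{\ge0}\to\mathbb R$; for a state-action distribution $\nu$ the flow is $\sigma_r=\lambda\sum_c\sum_s\sum_{a\ni r}\nu^c[s,a]$ and $r^c(s,a,\nu)=\sum_{r\in a}w_r(\sigma_r)$. State-policy distributions: $X=\prod_c\{\mu^c\in\mathbb R_{\ge0}^{\mathcal S^c\times\mathcal U^c_D}:\sum\mu^c=m^c\}$; $\mu^c_{\mathcal S\times\mathcal A}[s,a]=\sum_u\mu^c[s,u]\mathbf 1[u(s)=a]$; $\mu^c[\mathcal S^c,u]=\sum_s\mu^c[s,u]$; $F^c_u(\mu)=\sum_s\eta^{c,u}(s)r^c(s,u(s),\mu_{\mathcal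 S\times\mathcal A})$. MSNE: $\mu\in X$ such that for all $c,u$: (i) $\mu^c[\mathcal S^c,u]>0\Rightarrow F^c_u(\mu)\ge F^c_v(\mu)\ \forall v\in\mathcal U^c_D$; (ii) $\mu^c[s,u]=\eta^{c,u}(s)\mu^c[\mathcal S^c,u]$ for all $s$. The flows at an MSNE $\mu$ are $\sigma_r$ computed from $\mu_{\mathcal S\times\mathcal A}$. *)

(* Defs.v *)
From HB Require Import structures.
From mathcomp Require Import all_boot all_order all_algebra.
From mathcomp Require Import all_classical all_reals all_analysis.
Set Implicit Arguments.
Unset Strict Implicit.
Unset Printing Implicit Defensive.
Import Order.TTheory GRing.Theory Num.Theory.
Import numFieldNormedType.Exports.
Local Open Scope ring_scope.

Record game (R : realType) := Game {
  ncls : nat;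
  res : finType;
  st : 'I_ncls -> finType;
  act : forall c, st c -> {set {set res}};
  kern : forall c, st c -> {set res} -> st c -> R;
      (* kern c s a s' = phi^c(s' | s, a) : probability to jump from s to s'
         when playing a in s *)
  mass : 'I_ncls -> R;
  rate : R;
  wr : forall r : res, R -> R
}.
Arguments ncls {R} g.
Arguments res {R} g.
Arguments st {R} g c.
Arguments mass {R} g c.
Arguments rate {R} g.
Arguments wr {R} g r _.
Arguments act {R} g {c} s.
Arguments kern {R} g {c} s a s'.

Section GameDefs.
Variables (R : realType) (G : game R).

Local Notation C := (ncls G).
Local Notation S := (st G).
Local Notation Res := (res G).

Definition wf_game : Prop :=
  (forall c, 0 < mass G c) /\ 0 < rate G /\
  (forall c (s : S c), act G s != finset.set0) /\
  (forall c (s : S c) a, a \in act G s ->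
     (forall s', 0 <= kern G s a s') /\ \sum_(s' : S c) kern G s a s' = 1).

Definition pol (c : 'I_C) :=
  {u : {ffun S c -> {set Res}} | [forall s, u s \in act G s]}.

Definition polf (c : 'I_C) (u : pol c) (s : S c) : {set Res} := sval u s.

Definition phiu (c : 'I_C) (u : pol c) (s s' : S c) : R :=
  kern G s' (polf u s') s.

(* Generator lambda (phi^{c,u} - I) of the continuous-time chain, written as
   Q(s', s) = rate of jumping from s' to s. *)
Definition gen (c : 'I_C) (u : pol c) (s' s : S c) : R :=
  rate G * (phiu u s s' - (s' == s)%:R).

Definition is_stationary (c : 'I_C) (u : pol c) (eta : S c -> R) : Prop :=
  (forall s, 0 <= eta s) /\ \sum_s eta s = 1 /\
  (forall s, \sum_(s' : S c) eta s' * gen u s' s = 0).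

(* eta^{c,u}: the (under (A2) unique) stationary distribution. *)
Definition eta (c : 'I_C) (u : pol c) : S c -> R :=
  match pselect (exists e, is_stationary u e) with
  | left h => projT1 (cid h)
  | right _ => fun _ => 0
  end.

Definition edge (c : 'I_C) (u : pol c) : rel (S c) :=
  fun s s' => 0 < phiu u s' s.

Definition recurrent (c : 'I_C) (u : pol c) (s : S c) : bool :=
  [forall s', connect (edge u) s s' ==> connect (edge u) s' s].

Definition comm_class (c : 'I_C) (u : pol c) (s : S c) : {set S c} :=
  [set s' | connect (edge u) s s' && connect (edge u) s' s].

Definition recurrent_classes (c : 'I_C) (u : pol c) : {set {set S c}} :=
  [set comm_class u s | s in [set s | recurrent u s]].

Definition A2 : Prop :=
  forall c (u : pol c), #|recurrent_classes u| = 1%N.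

Definition idx := {c : 'I_C & (S c * pol c)%type}.

Definition mu_at (mu : idx -> R) (c : 'I_C) (s : S c) (u : pol c) : R :=
  mu (existT _ c (s, u)).

Definition Xset : set (idx -> R) :=
  [set mu : idx -> R | (forall i, 0 <= mu i) /\
            forall c, \sum_(s : S c) \sum_(u : pol c) mu_at mu s u = mass G c]%classic.

Definition muSA (mu : idx -> R) (c : 'I_C) (s : S c) (a : {set Res}) : R :=
  \sum_(u : pol c | polf u s == a) mu_at mu s u.

Definition muS (mu : idx -> R) (c : 'I_C) (u : pol c) : R :=
  \sum_(s : S c) mu_at mu s u.

Definition flow (mu : idx -> R) (r : Res) : R :=
  rate G * \sum_(c < C) \sum_(s : S c) \sum_(a in act G s | r \in a) muSA mu s a.

Definition reward (mu : idx -> R) (a : {set Res}) : R :=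
  \sum_(r in a) wr G r (flow mu r).

Definition Fpay (mu : idx -> R) (c : 'I_C) (u : pol c) : R :=
  \sum_(s : S c) eta u s * reward mu (polf u s).

Definition MSNE : set (idx -> R) :=
  [set mu : idx -> R | Xset mu /\
     forall c (u : pol c),
       (0 < muS mu u -> forall v : pol c, Fpay mu v <= Fpay mu u) /\
       (forall s, mu_at mu s u = eta u s * muS mu u)]%classic.

End GameDefs.
Arguments Xset {R} G _.
Arguments MSNE {R} G _.
Arguments flow {R} G mu r.
Arguments Fpay {R} G mu {c} u.
Arguments eta {R} G {c} u s.
Arguments muS {R} G mu {c} u.
Arguments muSA {R} G mu {c} s a.
Arguments mu_at {R} G mu {c} s u.
Arguments reward {R} G mu a.

Local Open Scope classical_set_scope.
Definition C1_on_nonneg (R : realType) (f : R -> R) : Prop :=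
  (forall x : R, 0 <= x -> derivable f x 1) /\
  {within `[0, +oo[%classic, continuous f^`()}.

Definition nonincreasing_on_nonneg (R : realType) (f : R -> R) : Prop :=
  {in `[0, +oo[ &, {homo f : x y /~ x <= y}}.

Definition decreasing_on_nonneg (R : realType) (f : R -> R) : Prop :=
  {in `[0, +oo[ &, {homo f : x y /~ x < y}}.

(* Main.v *)
Require Import Defs.
From HB Require Import structures.
From mathcomp Require Import all_boot all_order all_algebra.
From mathcomp Require Import all_classical all_reals all_analysis.
From mathcomp Require Import ring lra.
Import Order.TTheory GRing.Theory Num.Theory.
Import numFieldNormedType.Exports.
Local Open Scope ring_scope.
Local Open Scope classical_set_scope.
Set Implicit Arguments.
Unset Strict Implicit.

Section Main.
Variables (R : realType) (G : game R).
Hypothesis wf : wf_game G.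
Local Notation C := (ncls G).

Definition ii (nu : idx G -> R) := forall c (u : pol c) s,
  mu_at G nu s u = Defs.eta G u s * muS G nu u.

Lemma rate_gt0 : 0 < rate G. Proof. by case: wf => _ [] . Qed.
Lemma mass_gt0 c : 0 < mass G c. Proof. by case: wf. Qed.

Lemma polf_act c (u : pol c) s : polf u s \in act G s.
Proof. by rewrite /polf; move/forallP: (svalP u) => /(_ s). Qed.

Lemma flowE mu r : flow G mu r = rate G * \sum_(c < C) \sum_(s : st G c)
  \sum_(u : pol c) (r \in polf u s)%:R * mu_at G mu s u.
Proof.
rewrite /flow; congr (_ * _); apply: eq_bigr => c _; apply: eq_bigr => s _.
rewrite /muSA.
rewrite [RHS](bigID (fun u => r \in polf u s)) /= [X in _ + X]big1 ?addr0;
  last by move=> u /negbTE ->; rewrite mul0r.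
rewrite (@partition_big _ _ _ _ _ _ _ (fun u => polf u s)
   (fun a => (a \in act G s) && (r \in a))) /=; last first.
  by move=> u ru; rewrite ru polf_act.
apply: eq_bigr => a /andP[_ ra].
rewrite big_mkcond [RHS]big_mkcond; apply: eq_bigr => u _.
by case: eqP => [->|]; rewrite ?ra ?mul1r ?andbF.
Qed.

Lemma pairing mu nu : ii nu ->
  rate G * \sum_(c < C) \sum_(u : pol c) Fpay G mu u * muS G nu u =
  \sum_(r : res G) wr G r (flow G mu r) * flow G nu r.
Proof.
move=> hii.
set W := fun r => wr G r (flow G mu r).
transitivity (rate G * \sum_(c < C) \sum_(s : st G c) \sum_(u : pol c)
   \sum_(r : res G) (r \in polf u s)%:R * mu_at G nu s u * W r).
  congr (_ * _); apply: eq_bigr => c _.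
  rewrite [RHS]exchange_big /=; apply: eq_bigr => u _.
  rewrite /Fpay mulr_suml; apply: eq_bigr => s _.
  rewrite mulrAC -hii /reward big_mkcond mulr_sumr; apply: eq_bigr => r _.
  by rewrite /W; case: (r \in polf u s); rewrite ?mulr1 ?mul1r ?mulr0 ?mul0r.
under [RHS]eq_bigr do rewrite (flowE nu) mulrCA.
rewrite -mulr_sumr; congr (_ * _).
under [RHS]eq_bigr do rewrite mulr_sumr.
rewrite exchange_big; apply: eq_bigr => c _.
under [RHS]eq_bigr do rewrite mulr_sumr.
rewrite [RHS]exchange_big; apply: eq_bigr => s _.
under [RHS]eq_bigr do rewrite mulr_sumr.
rewrite [RHS]exchange_big; apply: eq_bigr => u _.
by apply: eq_bigr => r _; rewrite mulrC.
Qed.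

Lemma sum_muS mu : Xset G mu -> forall c, \sum_(u : pol c) muS G mu u = mass G c.
Proof. by move=> [_ h] c; rewrite /muS exchange_big; apply: h. Qed.

Lemma muS_ge0 mu c (u : pol c) : Xset G mu -> 0 <= muS G mu u.
Proof. by move=> [h _]; apply: sumr_ge0 => s _; apply: h. Qed.

Lemma VI mu nu : MSNE G mu -> Xset G nu ->
  \sum_(c < C) \sum_(u : pol c) Fpay G mu u * muS G nu u <=
  \sum_(c < C) \sum_(u : pol c) Fpay G mu u * muS G mu u.
Proof.
move=> [Xmu Nmu] Xnu; apply: ler_sum => c _.
rewrite -(ler_pM2l (mass_gt0 c)).
have -> : mass G c * \sum_(v : pol c) Fpay G mu v * muS G nu v =
   \sum_(u : pol c) \sum_(v : pol c) muS G mu u * (Fpay G mu v * muS G nu v).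
  by rewrite -(sum_muS Xmu c) mulr_suml; apply: eq_bigr => u _; rewrite mulr_sumr.
have -> : mass G c * \sum_(u : pol c) Fpay G mu u * muS G mu u =
   \sum_(u : pol c) \sum_(v : pol c) muS G mu u * (Fpay G mu u * muS G nu v).
  rewrite mulrC mulr_suml; apply: eq_bigr => u _.
  rewrite -(sum_muS Xnu c) mulr_sumr; apply: eq_bigr => v _; by rewrite mulrCA mulrA.
apply: ler_sum => u _; apply: ler_sum => v _.
have := muS_ge0 u Xmu; rewrite le0r => /orP[/eqP ->|yp].
  by rewrite !mul0r.
rewrite ler_pM2l // ler_wpM2r //; first exact: muS_ge0.
by case: (Nmu c u) => /(_ yp) /(_ v).
Qed.

Lemma flow_ge0 mu r : Xset G mu -> 0 <= flow G mu r.
Proof.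
move=> [h _]; rewrite flowE; apply: mulr_ge0; first exact: ltW rate_gt0.
apply: sumr_ge0 => c _; apply: sumr_ge0 => s _; apply: sumr_ge0 => u _.
by apply: mulr_ge0 => //; apply: h.
Qed.

Lemma in_nonneg (x : R) : 0 <= x -> x \in `[0, +oo[%classic.
Proof. by move=> hx; rewrite inE /= in_itv /= hx. Qed.

Hypothesis mono : forall r, nonincreasing_on_nonneg (wr G r).

Lemma key mu1 mu2 : MSNE G mu1 -> MSNE G mu2 -> forall r,
  (wr G r (flow G mu1 r) - wr G r (flow G mu2 r)) * (flow G mu1 r - flow G mu2 r) = 0.
Proof.
move=> h1 h2.
have X1 := h1.1; have X2 := h2.1.
have ii1 : ii mu1 by move=> c u s; case: (h1.2 c u).
have ii2 : ii mu2 by move=> c u s; case: (h2.2 c u).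
set D := fun r => (wr G r (flow G mu1 r) - wr G r (flow G mu2 r)) *
   (flow G mu1 r - flow G mu2 r).
have Dle0 : forall r, D r <= 0.
  move=> r; rewrite /D.
  have g1 := flow_ge0 r X1; have g2 := flow_ge0 r X2.
  have [le12|le21] := leP (flow G mu1 r) (flow G mu2 r).
    have hw : wr G r (flow G mu2 r) <= wr G r (flow G mu1 r).
      by apply: (mono r) => //; exact: in_nonneg.
    by apply: mulr_ge0_le0; rewrite ?subr_ge0 ?subr_le0.
  have hw : wr G r (flow G mu1 r) <= wr G r (flow G mu2 r).
    by apply: (mono r) => //; [exact: in_nonneg|exact: in_nonneg|exact: ltW].
  by apply: mulr_le0_ge0; rewrite ?subr_ge0 ?subr_le0 // ltW.
have sumD : 0 <= \sum_r D r.
  have -> : \sum_r D r =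
     (rate G * \sum_(c < C) \sum_(u : pol c) Fpay G mu1 u * muS G mu1 u -
      rate G * \sum_(c < C) \sum_(u : pol c) Fpay G mu1 u * muS G mu2 u) +
     (rate G * \sum_(c < C) \sum_(u : pol c) Fpay G mu2 u * muS G mu2 u -
      rate G * \sum_(c < C) \sum_(u : pol c) Fpay G mu2 u * muS G mu1 u).
    rewrite !pairing // -!sumrB -big_split /=; apply: eq_bigr => r _.
    rewrite /D; move: (wr G r (flow G mu1 r)) (wr G r (flow G mu2 r)) (flow G mu1 r) (flow G mu2 r) => a b d e; ring.
  apply: addr_ge0; rewrite -mulrBr; apply: mulr_ge0; rewrite ?subr_ge0;
    try exact: ltW rate_gt0; exact: VI.
move=> r.
have h0 : \sum_(i : res G | xpredT i) - D i = 0.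
  apply/eqP; rewrite eq_le; apply/andP; split.
    by rewrite sumrN oppr_le0.
  by apply: sumr_ge0 => i _; rewrite oppr_ge0.
have := @psumr_eq0P _ (res G) xpredT (fun r => - D r)
  (fun r _ => ltac:(rewrite oppr_ge0; exact: Dle0)) h0 r isT.
by move/eqP; rewrite oppr_eq0 => /eqP.
Qed.

Lemma weq mu1 mu2 r : MSNE G mu1 -> MSNE G mu2 ->
  wr G r (flow G mu1 r) = wr G r (flow G mu2 r).
Proof.
move=> h1 h2; have /eqP := key h1 h2 r; rewrite mulf_eq0 => /orP[|].
  by rewrite subr_eq0 => /eqP.
by rewrite subr_eq0 => /eqP ->.
Qed.

Definition lin (a b : R) (x y : idx G -> R) : idx G -> R :=
  fun i => a * x i + b * y i.

Lemma muS_lin a b x y c (u : pol c) :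
  muS G (lin a b x y) u = a * muS G x u + b * muS G y u.
Proof. by rewrite /muS /mu_at /lin /= big_split /= -!mulr_sumr. Qed.

Lemma flow_lin a b x y r :
  flow G (lin a b x y) r = a * flow G x r + b * flow G y r.
Proof.
rewrite !flowE (mulrCA a) (mulrCA b) -mulrDr; congr (_ * _).
rewrite !mulr_sumr -big_split; apply: eq_bigr => c _ /=.
rewrite !mulr_sumr -big_split; apply: eq_bigr => s _ /=.
rewrite !mulr_sumr -big_split; apply: eq_bigr => u _ /=.
by rewrite /mu_at /lin mulrDr (mulrCA a) (mulrCA b).
Qed.

Lemma MSNE_lin x y t : 0 <= t -> t <= 1 -> MSNE G x -> MSNE G y ->
  MSNE G (lin t (1 - t) x y).
Proof.
move=> t0 t1 hx hy.
have Xx := hx.1; have Xy := hy.1.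
have fl r : flow G (lin t (1 - t) x y) r = t * flow G x r + (1 - t) * flow G y r.
  exact: flow_lin.
have wl r : wr G r (flow G (lin t (1 - t) x y) r) = wr G r (flow G x r).
  have e := weq r hx hy.
  have gx := flow_ge0 r Xx; have gy := flow_ge0 r Xy.
  have [h|h] := leP (flow G x r) (flow G y r).
    have lo : flow G x r <= flow G (lin t (1 - t) x y) r by rewrite fl; nra.
    have hi : flow G (lin t (1 - t) x y) r <= flow G y r by rewrite fl; nra.
    apply/le_anti/andP; split.
      by apply: (mono r) => //; apply: in_nonneg => //; lra.
    by rewrite e; apply: (mono r) => //; apply: in_nonneg => //; lra.
  have lo : flow G y r <= flow G (lin t (1 - t) x y) r by rewrite fl; nra.
  have hi : flow G (lin t (1 - t) x y) r <= flow G x r by rewrite fl; nra.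
  apply/le_anti/andP; split.
    by rewrite e; apply: (mono r) => //; apply: in_nonneg => //; lra.
  by apply: (mono r) => //; apply: in_nonneg => //; lra.
have Fl c (u : pol c) : Fpay G (lin t (1 - t) x y) u = Fpay G x u.
  rewrite /Fpay; apply: eq_bigr => s _; congr (_ * _).
  by rewrite /reward; apply: eq_bigr => r _; exact: wl.
have Fxy c (u : pol c) : Fpay G x u = Fpay G y u.
  rewrite /Fpay; apply: eq_bigr => s _; congr (_ * _).
  by rewrite /reward; apply: eq_bigr => r _; exact: weq.
split.
  split.
    move=> i; rewrite /lin; apply: addr_ge0; apply: mulr_ge0 => //.
    - exact: Xx.1.
    - lra.
    - exact: Xy.1.
  move=> c; rewrite exchange_big /=.
  transitivity (\sum_(u : pol c) muS G (lin t (1 - t) x y) u) => //.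
  under eq_bigr do rewrite muS_lin.
  rewrite big_split /= -!mulr_sumr !sum_muS //.
  by move: (mass G c) => m; ring.
move=> c u; split.
  move=> hpos v; rewrite !Fl.
  rewrite muS_lin in hpos.
  have [px|nx] := ltP 0 (muS G x u).
    by case: (hx.2 c u) => /(_ px).
  have my := muS_ge0 u Xy; have mx := muS_ge0 u Xx.
  have py : 0 < muS G y u by nra.
  by rewrite !Fxy; case: (hy.2 c u) => /(_ py).
move=> s; rewrite muS_lin.
change (t * mu_at G x s u + (1 - t) * mu_at G y s u =
  Defs.eta G u s * (t * muS G x u + (1 - t) * muS G y u)).
rewrite (hx.2 c u).2 (hy.2 c u).2.
by move: (Defs.eta G u s) (muS G x u) (muS G y u) => e p q; ring.
Qed.

Lemma MSNE_convex : convex_set (MSNE G).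
Proof.
move=> x y l /set_mem hx /set_mem hy; apply/mem_set.
change (MSNE G (lin l%:num (1 - l%:num) x y)).
apply: MSNE_lin => //.
Qed.

Lemma strict_flow mu1 mu2 r :
  (forall r, decreasing_on_nonneg (wr G r)) ->
  MSNE G mu1 -> MSNE G mu2 -> flow G mu1 r = flow G mu2 r.
Proof.
move=> dec h1 h2.
have g1 := flow_ge0 r h1.1; have g2 := flow_ge0 r h2.1.
have := key h1 h2 r; move/eqP; rewrite mulf_eq0 !subr_eq0.
case/orP => /eqP e //.
have [h|h|//] := ltgtP (flow G mu1 r) (flow G mu2 r).
  have : wr G r (flow G mu2 r) < wr G r (flow G mu1 r).
    by apply: (dec r) => //; apply: in_nonneg.
  by rewrite e ltxx.
have : wr G r (flow G mu1 r) < wr G r (flow G mu2 r).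
  by apply: (dec r) => //; apply: in_nonneg.
by rewrite e ltxx.
Qed.

End Main.

Section Top.
Variables (R : realType) (G : game R).
Hypothesis wf : wf_game G.
Hypothesis C1 : forall r, C1_on_nonneg (wr G r).
Local Notation T := {ptws idx G -> R}.
#[local] Instance FFT (mu : T) : Filter (nbhs mu) | 0 := nbhs_filter mu.

Lemma clos_cond (A : set T) (mu : T) (f g : T -> R) :
  closure A mu -> f @ mu --> f mu -> g @ mu --> g mu ->
  (forall nu, A nu -> 0 < g nu -> 0 <= f nu) -> 0 < g mu -> 0 <= f mu.
Proof.
move=> hc cf cg hA gp; rewrite leNgt; apply/negP => fn.
have nf : \forall t \near mu, f t < 0 := @cvgr_lt _ _ _ (nbhs_filter mu) _ _ cf _ fn.
have ng : \forall t \near mu, 0 < g t := @cvgr_gt _ _ _ (nbhs_filter mu) _ _ cg _ gp.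
have [nu [Anu [fnu gnu]]] := hc _ (filterI nf ng).
by have := hA nu Anu gnu; rewrite leNgt fnu.
Qed.

Section Cont.
Variable mu : T.

Lemma cont_proj i : (fun nu : T => nu i) @ mu --> mu i.
Proof. exact: (@proj_continuous (idx G) (fun _ => R) i mu). Qed.

Lemma cont_sum (I : Type) (s : seq I) (P : pred I) (F : I -> T -> R) :
  (forall i, P i -> F i @ mu --> F i mu) ->
  (fun nu => \sum_(i <- s | P i) F i nu) @ mu --> \sum_(i <- s | P i) F i mu.
Proof.
move=> hF; elim: s => [|x s IH].
  have -> : (fun nu => \sum_(i <- [::] | P i) F i nu) = (fun _ => 0).
    by apply/funext => nu; rewrite big_nil.
  rewrite big_nil; exact: cvg_cst.
rewrite big_cons; case: ifP => Px.
  have -> : (fun nu => \sum_(i <- x :: s | P i) F i nu) =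
      (fun nu => F x nu + \sum_(i <- s | P i) F i nu).
    by apply/funext => nu; rewrite big_cons Px.
  by apply: cvgD => //; apply: hF.
have -> : (fun nu => \sum_(i <- x :: s | P i) F i nu) =
    (fun nu => \sum_(i <- s | P i) F i nu).
  by apply/funext => nu; rewrite big_cons Px.
exact: IH.
Qed.

Lemma cont_muS c (u : pol c) : (fun nu : T => muS G nu u) @ mu --> muS G mu u.
Proof. rewrite /muS; apply: cont_sum => s _; exact: cont_proj. Qed.

Lemma cont_flow r : (fun nu : T => flow G nu r) @ mu --> flow G mu r.
Proof.
rewrite /flow; apply: cvgM; first exact: cvg_cst.
apply: cont_sum => c _; apply: cont_sum => s _; apply: cont_sum => a _.
rewrite /muSA; apply: cont_sum => u _; exact: cont_proj.
Qed.

Lemma cont_Fpay c (u : pol c) : Xset G mu ->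
  (fun nu : T => Fpay G nu u) @ mu --> Fpay G mu u.
Proof.
move=> Xmu; rewrite /Fpay; apply: cont_sum => s _; apply: cvgM; first exact: cvg_cst.
rewrite /reward; apply: cont_sum => r _.
have hd := (C1 r).1 _ (flow_ge0 wf r Xmu).
have hc : {for flow G mu r, continuous (wr G r)}.
  by move: hd => /derivable1_diffP /differentiable_continuous.
exact (continuous_cvg _ hc (cont_flow (r:=r))).
Qed.

End Cont.

Lemma MSNE_closed : closed (MSNE G : set T).
Proof.
move=> mu hmu.
have K1 (f : T -> R) : f @ mu --> f mu -> (forall nu, MSNE G nu -> 0 <= f nu) ->
    0 <= f mu.
  move=> cf h; apply: (@clos_cond _ mu f (fun _ => 1) hmu cf (cvg_cst _)).
    by move=> nu hn _; exact: h.
  exact: ltr01.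
have K2 (f g : T -> R) : f @ mu --> f mu -> g @ mu --> g mu ->
    (forall nu, MSNE G nu -> f nu = g nu) -> f mu = g mu.
  move=> cf cg h; apply/eqP; rewrite eq_le -subr_ge0 -[g mu <= f mu]subr_ge0.
  apply/andP; split.
    apply: (K1 (fun nu => g nu - f nu)); first exact: cvgB.
    by move=> nu hn; rewrite h // subrr.
  apply: (K1 (fun nu => f nu - g nu)); first exact: cvgB.
  by move=> nu hn; rewrite h // subrr.
have Xmu : Xset G mu.
  split.
    move=> i; apply: (K1 (fun nu => nu i)); first exact: cont_proj.
    by move=> nu [[h _] _].
  move=> c; apply: (K2 (fun nu => \sum_(s : st G c) \sum_(u : pol c) mu_at G nu s u)
                       (fun _ => mass G c)).
  - by apply: cont_sum => s _; apply: cont_sum => u _; exact: cont_proj.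
  - exact: cvg_cst.
  - by move=> nu [[_ h] _].
have iimu c (u : pol c) s : mu_at G mu s u = Defs.eta G u s * muS G mu u.
  apply: (K2 (fun nu => mu_at G nu s u) (fun nu => Defs.eta G u s * muS G nu u)).
  - exact: cont_proj.
  - by apply: cvgM; [exact: cvg_cst | exact: cont_muS].
  - by move=> nu [_ h]; case: (h c u).
split => // c u; split; last exact: iimu.
move=> hpos v; rewrite -subr_ge0.
apply: (@clos_cond _ mu (fun nu => Fpay G nu u - Fpay G nu v)
          (fun nu => muS G nu u) hmu) => //.
- by apply: cvgB; apply: cont_Fpay.
- exact: cont_muS.
- by move=> nu [_ h] p; rewrite subr_ge0; case: (h c u) => /(_ p) /(_ v).
Qed.

Lemma MSNE_compact : compact (MSNE G : set T).
Proof.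
apply: (@subclosed_compact _ _
  [set f : T | forall i, (`[0, mass G (projT1 i)]%classic : set R) (f i)]).
- exact: MSNE_closed.
- exact: (@tychonoff (idx G) (fun _ => R)
     (fun i => `[0, mass G (projT1 i)]%classic) (fun i => ltac:(apply: segment_compact))).
move=> mu [[h0 hs] _] [c [s u]] /=.
rewrite in_itv /=; apply/andP; split; first exact: h0.
change (mu_at G mu s u <= mass G c).
have := hs c; rewrite (bigD1 s) //= (bigD1 u) //=.
have a : 0 <= \sum_(u' : pol c | u' != u) mu_at G mu s u'.
  by apply: sumr_ge0 => ? _; apply: h0.
have b : 0 <= \sum_(s' : st G c | s' != s) \sum_(u' : pol c) mu_at G mu s' u'.
  by apply: sumr_ge0 => ? _; apply: sumr_ge0 => ? _; apply: h0.
move=> e; lra.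
Qed.

End Top.

Theorem corollary1 (R : realType) (G : game R) :
  wf_game G -> A2 G ->
  (forall r, C1_on_nonneg (wr G r)) ->
  (forall r, nonincreasing_on_nonneg (wr G r)) ->
  compact (MSNE G : set {ptws idx G -> R}) /\
  convex_set (MSNE G) /\
  ((forall r, decreasing_on_nonneg (wr G r)) ->
   forall mu1 mu2, MSNE G mu1 -> MSNE G mu2 ->
   forall r, flow G mu1 r = flow G mu2 r).
Proof.
move=> wf _ c1 mono; split; first exact: MSNE_compact.
split; first exact: MSNE_convex.
move=> dec mu1 mu2 h1 h2 r; exact: strict_flow.
Qed.
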